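(* Let $T$ be a triangle of type $(120^\circ,30^\circ,30^\circ)$. Then $h(n,T)\le\frac{4}{81}n^3$ for every positive integer $n$.
   Context: A triangle is of type $(\alpha,\beta,\gamma)$ if $\alpha\ge\beta\ge\gamma$ are its interior angles in degrees. For a triangle $T$ with side lengths $a,b,c$ and $\varepsilon>0$, with $\varepsilon'=\varepsilon\min\{a,b,c\}$, a triangle $A'B'C'$ is $\varepsilon$-congruent to $T$ if there are $A,B,C\in\mathbb{R}^2$ with $ABC$ congruent to $T$ and $A',B',C'$ within distance $\varepsilon'$ of $A,B,C$ respectively. $h(n,T,\varepsilon)$ is the maximum over $n$-point sets $P\subseteq\mathbb{R}^2$ of the number of 3-subsets of $P$ forming triangles $\varepsilon$-congruent to $T$, and $h(n,T)=\min_{\varepsilon>0}h(n,T,\varepsilon)$. *)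

(* Defs.v *)
From Stdlib Require Import Reals List ClassicalEpsilon.
From Coquelicot Require Import Coquelicot.
Open Scope R_scope.

Definition pt : Type := (R * R)%type.
Definition dist (p q : pt) : R :=
  sqrt ((fst p - fst q) ^ 2 + (snd p - snd q) ^ 2).

(* A triangle T is given by its side lengths (a, b, c); a genuine
   (non-degenerate) triangle satisfies the strict triangle inequalities. *)
Definition is_triangle (a b c : R) : Prop :=
  0 < a /\ 0 < b /\ 0 < c /\ a < b + c /\ b < c + a /\ c < a + b.

(* Interior angle (in degrees) opposite the side of length x, the other two
   sides having lengths y and z (law of cosines). *)
Definition angle_deg (x y z : R) : R :=
  acos ((y ^ 2 + z ^ 2 - x ^ 2) / (2 * y * z)) * 180 / PI.

Definition of_type (a b c al be ga : R) : Prop :=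
  al >= be /\ be >= ga /\
  (let A := angle_deg a b c in let B := angle_deg b c a in
   let C := angle_deg c a b in
   (A = al /\ B = be /\ C = ga) \/ (A = al /\ B = ga /\ C = be) \/
   (A = be /\ B = al /\ C = ga) \/ (A = be /\ B = ga /\ C = al) \/
   (A = ga /\ B = al /\ C = be) \/ (A = ga /\ B = be /\ C = al)).

Definition congruent_to (A B C : pt) (a b c : R) : Prop :=
  dist B C = a /\ dist C A = b /\ dist A B = c.

Definition eps_congruent (a b c eps : R) (A' B' C' : pt) : Prop :=
  exists A B C : pt, congruent_to A B C a b c /\
    let eps' := eps * Rmin a (Rmin b c) in
    dist A' A <= eps' /\ dist B' B <= eps' /\ dist C' C <= eps'.

Definition forms_eps_congruent (a b c eps : R) (p q r : pt) : Prop :=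
  eps_congruent a b c eps p q r \/ eps_congruent a b c eps p r q \/
  eps_congruent a b c eps q p r \/ eps_congruent a b c eps q r p \/
  eps_congruent a b c eps r p q \/ eps_congruent a b c eps r q p.

Definition ind (Q : Prop) : nat :=
  if excluded_middle_informative Q then 1%nat else 0%nat.

(* For an n-point set P = {P 0, ..., P (n-1)} (P injective on [0,n)),
   the number of 3-subsets {P i, P j, P k} (i < j < k < n) forming
   triangles eps-congruent to T. *)
Definition count_eps (n : nat) (P : nat -> pt) (a b c eps : R) : nat :=
  list_sum (map (fun k =>
    list_sum (map (fun j =>
      list_sum (map (fun i =>
        ind (forms_eps_congruent a b c eps (P i) (P j) (P k)))
      (seq 0 j)))
    (seq 0 k)))
  (seq 0 n)).

Definition n_point_set (n : nat) (P : nat -> pt) : Prop :=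
  forall i j : nat, (i < n)%nat -> (j < n)%nat -> P i = P j -> i = j.

(* h(n, T, eps): maximum over n-point sets of the count (as a supremum;
   the set of values is finite and nonempty, so the sup is attained). *)
Definition h_eps (n : nat) (a b c eps : R) : Rbar :=
  Lub_Rbar (fun x => exists P : nat -> pt,
    n_point_set n P /\ x = INR (count_eps n P a b c eps)).

(* h(n, T) = min over eps > 0 of h(n, T, eps) (as an infimum; the values
   are natural numbers, so the infimum is attained, i.e. is the min). *)
Definition h (n : nat) (a b c : R) : Rbar :=
  Glb_Rbar (fun x => exists eps : R, 0 < eps /\ Finite x = h_eps n a b c eps).

(* Main.v *)
Require Import Defs.
From Stdlib Require Import Reals.
From Coquelicot Require Import Coquelicot.
From Stdlib Require Import Lra Psatz List Permutation Classical ClassicalEpsilon ZArith.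
Import ListNotations.
Open Scope R_scope.

Lemma tri_range (x y z : R) : 0 < x -> 0 < y -> 0 < z -> x < y + z -> y < z + x -> z < x + y ->
  -1 <= (y ^ 2 + z ^ 2 - x ^ 2) / (2 * y * z) <= 1.
Proof.
  intros hx hy hz h1 h2 h3.
  assert (hyz : 0 < 2 * y * z) by nra.
  set (t := (y ^ 2 + z ^ 2 - x ^ 2) / (2 * y * z)).
  assert (ht : t * (2 * y * z) = y ^ 2 + z ^ 2 - x ^ 2) by (unfold t; field; lra).
  split; nra.
Qed.

Lemma angle120 (x y z : R) : 0 < x -> 0 < y -> 0 < z -> x < y + z -> y < z + x -> z < x + y ->
  angle_deg x y z = 120 -> y ^ 2 + z ^ 2 - x ^ 2 = - (y * z).
Proof.
  intros hx hy hz h1 h2 h3 H. unfold angle_deg in H.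
  pose proof (tri_range x y z hx hy hz h1 h2 h3) as hr.
  set (t := (y ^ 2 + z ^ 2 - x ^ 2) / (2 * y * z)) in *.
  assert (HP := PI_RGT_0).
  assert (acos t = PI - PI / 3).
  { apply (Rmult_eq_reg_r (180 / PI)). 2: { apply Rgt_not_eq. apply Rdiv_lt_0_compat; lra. }
    unfold Rdiv in *. rewrite <- Rmult_assoc, H. field. lra. }
  assert (ht : t = - (1/2)).
  { rewrite <- (cos_acos t hr), H0, Rtrigo_facts.cos_pi_minus, cos_PI3. reflexivity. }
  unfold t in ht. assert (hyz : 2 * y * z <> 0) by nra.
  apply (f_equal (fun u => u * (2 * y * z))) in ht. unfold Rdiv in ht.
  rewrite Rmult_assoc, Rinv_l in ht by exact hyz. lra.
Qed.

Lemma angle30 (x y z : R) : 0 < x -> 0 < y -> 0 < z -> x < y + z -> y < z + x -> z < x + y ->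
  angle_deg x y z = 30 -> y ^ 2 + z ^ 2 - x ^ 2 = sqrt 3 * (y * z).
Proof.
  intros hx hy hz h1 h2 h3 H. unfold angle_deg in H.
  pose proof (tri_range x y z hx hy hz h1 h2 h3) as hr.
  set (t := (y ^ 2 + z ^ 2 - x ^ 2) / (2 * y * z)) in *.
  assert (HP := PI_RGT_0).
  assert (acos t = PI / 6).
  { apply (Rmult_eq_reg_r (180 / PI)). 2: { apply Rgt_not_eq. apply Rdiv_lt_0_compat; lra. }
    unfold Rdiv in *. rewrite <- Rmult_assoc, H. field. lra. }
  assert (ht : t = sqrt 3 / 2).
  { rewrite <- (cos_acos t hr), H0, cos_PI6. reflexivity. }
  unfold t in ht. assert (hyz : 2 * y * z <> 0) by nra.
  apply (f_equal (fun u => u * (2 * y * z))) in ht. unfold Rdiv in ht.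
  rewrite Rmult_assoc, Rinv_l in ht by exact hyz. lra.
Qed.

Lemma sq3_facts : sqrt 3 * sqrt 3 = 3 /\ 1.732 < sqrt 3 < 1.7321.
Proof.
  assert (h := sqrt_sqrt 3 ltac:(lra)). assert (hp := sqrt_pos 3). split; [exact h|]. nra.
Qed.

Lemma solve3 (a b c : R) : 0 < a -> 0 < b -> 0 < c ->
  b ^ 2 + c ^ 2 - a ^ 2 = - (b * c) ->
  c ^ 2 + a ^ 2 - b ^ 2 = sqrt 3 * (c * a) ->
  a ^ 2 + b ^ 2 - c ^ 2 = sqrt 3 * (a * b) -> b = c /\ a = sqrt 3 * b.
Proof.
  intros ha hb hc e1 e2 e3. destruct sq3_facts as [h3 hb3].
  assert (hA : 2 * a = sqrt 3 * (b + c)).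
  { assert (2 * a * a = sqrt 3 * (b + c) * a) by nra. nra. }
  assert (hbc : (c - b) * (2 * (c + b) - sqrt 3 * a) = 0) by nra.
  assert (b = c).
  { apply Rmult_integral in hbc. destruct hbc as [h|h]; [lra|].
    exfalso. assert (2 * sqrt 3 * a = 3 * (b + c)) by nra. nra. }
  subst c. split; [reflexivity|]. nra.
Qed.

Lemma sides (a b c : R) : is_triangle a b c -> of_type a b c 120 30 30 ->
  exists s, 0 < s /\ ((a = sqrt 3 * s /\ b = s /\ c = s) \/ (a = s /\ b = sqrt 3 * s /\ c = s)
     \/ (a = s /\ b = s /\ c = sqrt 3 * s)).
Proof.
  intros [ha [hb [hc [h1 [h2 h3]]]]] [_ [_ H]]. cbv zeta in H.
  assert (P120 : forall x y z, 0 < x -> 0 < y -> 0 < z -> x < y + z -> y < z + x -> z < x + y ->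
     angle_deg x y z = 120 -> angle_deg y z x = 30 -> angle_deg z x y = 30 ->
     y = z /\ x = sqrt 3 * y).
  { intros x y z hx hy hz g1 g2 g3 A B C.
    apply solve3; auto.
    - apply angle120; auto.
    - apply angle30; auto; lra.
    - apply angle30; auto; lra. }
  destruct H as [[A [B C]]|[[A [B C]]|[[A [B C]]|[[A [B C]]|[[A [B C]]|[A [B C]]]]]]].
  - destruct (P120 a b c ha hb hc h1 h2 h3 A B C) as [e1 e2]. exists b. split; auto.
  - destruct (P120 a b c ha hb hc h1 h2 h3 A B C) as [e1 e2]. exists b. split; auto.
  - destruct (P120 b c a hb hc ha h2 h3 h1 B C A) as [e1 e2]. exists c. split; auto.
  - destruct (P120 c a b hc ha hb h3 h1 h2 C A B) as [e1 e2]. exists a. split; auto.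
  - destruct (P120 b c a hb hc ha h2 h3 h1 B C A) as [e1 e2]. exists c. split; auto.
  - destruct (P120 c a b hc ha hb h3 h1 h2 C A B) as [e1 e2]. exists a. split; auto.
Qed.


Lemma Rabs_le_inv (x y : R) : Rabs x <= y -> - y <= x <= y.
Proof. unfold Rabs. destruct (Rcase_abs x); lra. Qed.

Definition D (p q : pt) : R := (fst p - fst q) ^ 2 + (snd p - snd q) ^ 2.

Lemma D_nonneg p q : 0 <= D p q.
Proof. unfold D. apply Rplus_le_le_0_compat; apply pow2_ge_0. Qed.

Lemma D_sym p q : D p q = D q p.
Proof. unfold D. ring. Qed.

Lemma D_refl p : D p p = 0.
Proof. unfold D. ring. Qed.

Lemma dist_D p q : Defs.dist p q = sqrt (D p q).
Proof. reflexivity. Qed.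

Lemma dist_sq p q : Defs.dist p q * Defs.dist p q = D p q.
Proof. unfold Defs.dist. apply sqrt_sqrt. apply D_nonneg. Qed.

Lemma dist_nonneg p q : 0 <= Defs.dist p q.
Proof. apply sqrt_pos. Qed.

Lemma dist_sym p q : Defs.dist p q = Defs.dist q p.
Proof. unfold Defs.dist. f_equal. ring. Qed.

Lemma dist_tri p q r : Defs.dist p r <= Defs.dist p q + Defs.dist q r.
Proof.
  assert (h1 := dist_sq p q). assert (h2 := dist_sq q r). assert (h3 := dist_sq p r).
  assert (n1 := dist_nonneg p q). assert (n2 := dist_nonneg q r). assert (n3 := dist_nonneg p r).
  assert (cs := sqrt_cauchy (fst p - fst q) (snd p - snd q) (fst q - fst r) (snd q - snd r)).
  unfold Rsqr in cs.
  assert (e1 : sqrt ((fst p - fst q) * (fst p - fst q) + (snd p - snd q) * (snd p - snd q)) = Defs.dist p q)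
    by (unfold Defs.dist; f_equal; ring).
  assert (e2 : sqrt ((fst q - fst r) * (fst q - fst r) + (snd q - snd r) * (snd q - snd r)) = Defs.dist q r)
    by (unfold Defs.dist; f_equal; ring).
  rewrite e1, e2 in cs.
  assert (D p r = D p q + D q r + 2 * ((fst p - fst q) * (fst q - fst r) + (snd p - snd q) * (snd q - snd r)))
    by (unfold D; ring).
  nra.
Qed.

Definition epsv : R := 1 / 100000.
Definition eta : R := 1 / 10000.

Definition Sides (a b c s : R) : Prop := 0 < s /\
  ((a = sqrt 3 * s /\ b = s /\ c = s) \/ (a = s /\ b = sqrt 3 * s /\ c = s)
     \/ (a = s /\ b = s /\ c = sqrt 3 * s)).



Lemma rmin_s a b c s : Sides a b c s -> Rmin a (Rmin b c) = s.
Proof.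
  intros [hs H]. destruct sq3_facts as [_ h].
  destruct H as [[-> [-> ->]]|[[-> [-> ->]]|[-> [-> ->]]]];
  repeat (unfold Rmin; destruct Rle_dec); nra.
Qed.

Definition lng (s : R) (p q : pt) : bool :=
  if Rlt_dec (2 * s ^ 2) (D p q) then true else false.
Definition cval (b : bool) : R := if b then 3 else 1.
Definition good (s : R) (p q : pt) : Prop :=
  Rabs (D p q - cval (lng s p q) * s ^ 2) <= eta * s ^ 2.
Definition nb (b : bool) : nat := if b then 1%nat else 0%nat.
Definition typ3 (s : R) (p q r : pt) : Prop :=
  good s p q /\ good s q r /\ good s p r /\
  (nb (lng s p q) + nb (lng s q r) + nb (lng s p r) = 1)%nat.

Lemma lng_sym s p q : lng s p q = lng s q p.
Proof. unfold lng. rewrite D_sym. reflexivity. Qed.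
Lemma good_sym s p q : good s p q -> good s q p.
Proof. unfold good. rewrite D_sym, lng_sym. auto. Qed.

Lemma typ3_12 s p q r : typ3 s p q r -> typ3 s q p r.
Proof.
  intros [h1 [h2 [h3 h4]]]. repeat split.
  - apply good_sym; auto.
  - auto.
  - auto.
  - rewrite (lng_sym s q p). lia.
Qed.
Lemma typ3_23 s p q r : typ3 s p q r -> typ3 s p r q.
Proof.
  intros [h1 [h2 [h3 h4]]]. repeat split.
  - auto.
  - apply good_sym; auto.
  - auto.
  - rewrite (lng_sym s r q). lia.
Qed.

Lemma good_short s p q : 0 < s -> Rabs (Defs.dist p q - s) <= 2 * (epsv * s) -> good s p q /\ lng s p q = false.
Proof.
  intros hs h. unfold epsv in h. apply Rabs_le_inv in h.
  assert (hd := dist_sq p q). assert (hn := dist_nonneg p q).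
  set (d := Defs.dist p q) in *.
  assert (l1 : (1 - 2/100000) * s <= d) by lra. assert (l2 : d <= (1 + 2/100000) * s) by lra.
  assert (hD : (1 - 2/100000)^2 * s^2 <= D p q <= (1 + 2/100000)^2 * s^2).
  { rewrite <- hd. split.
    - replace ((1 - 2/100000)^2 * s^2) with (((1 - 2/100000) * s) * ((1 - 2/100000) * s)) by ring.
      apply Rmult_le_compat; lra.
    - replace ((1 + 2/100000)^2 * s^2) with (((1 + 2/100000) * s) * ((1 + 2/100000) * s)) by ring.
      apply Rmult_le_compat; lra. }
  assert (hl : lng s p q = false).
  { unfold lng. destruct Rlt_dec; [nra|reflexivity]. }
  split; [|exact hl]. unfold good. rewrite hl. unfold cval, eta. apply Rabs_le. nra.
Qed.

Lemma good_long s p q : 0 < s -> Rabs (Defs.dist p q - sqrt 3 * s) <= 2 * (epsv * s) -> good s p q /\ lng s p q = true.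
Proof.
  intros hs h. unfold epsv in h. apply Rabs_le_inv in h. destruct sq3_facts as [h3 hb].
  assert (hd := dist_sq p q). assert (hn := dist_nonneg p q).
  set (d := Defs.dist p q) in *.
  assert (l1 : (sqrt 3 - 2/100000) * s <= d) by lra. assert (l2 : d <= (sqrt 3 + 2/100000) * s) by lra.
  assert (hD : (sqrt 3 - 2/100000)^2 * s^2 <= D p q <= (sqrt 3 + 2/100000)^2 * s^2).
  { rewrite <- hd. split.
    - replace ((sqrt 3 - 2/100000)^2 * s^2) with (((sqrt 3 - 2/100000) * s) * ((sqrt 3 - 2/100000) * s)) by ring.
      apply Rmult_le_compat; nra.
    - replace ((sqrt 3 + 2/100000)^2 * s^2) with (((sqrt 3 + 2/100000) * s) * ((sqrt 3 + 2/100000) * s)) by ring.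
      apply Rmult_le_compat; nra. }
  assert (hl : lng s p q = true).
  { unfold lng. destruct Rlt_dec; [reflexivity|nra]. }
  split; [|exact hl]. unfold good. rewrite hl. unfold cval, eta. apply Rabs_le. nra.
Qed.

Lemma close2 (A' B' A B : pt) e L : Defs.dist A' A <= e -> Defs.dist B' B <= e -> Defs.dist A B = L ->
  Rabs (Defs.dist A' B' - L) <= 2 * e.
Proof.
  intros h1 h2 h3. apply Rabs_le.
  assert (t1 := dist_tri A' A B'). assert (t2 := dist_tri A B B').
  assert (t3 := dist_tri A A' B). assert (t4 := dist_tri A' B' B).
  assert (s1 := dist_sym A A'). assert (s2 := dist_sym B B').
  lra.
Qed.

Lemma ec_typ3 a b c s A' B' C' : Sides a b c s -> eps_congruent a b c epsv A' B' C' -> typ3 s A' B' C'.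
Proof.
  intros HS [A [B [C [[hBC [hCA hAB]] [dA [dB dC]]]]]].
  rewrite (rmin_s a b c s HS) in dA, dB, dC.
  assert (q1 := close2 B' C' B C _ _ dB dC hBC).
  assert (q2 := close2 C' A' C A _ _ dC dA hCA).
  assert (q3 := close2 A' B' A B _ _ dA dB hAB).
  destruct HS as [hs H].
  destruct H as [[-> [-> ->]]|[[-> [-> ->]]|[-> [-> ->]]]].
  - destruct (good_long s _ _ hs q1) as [g1 l1]. destruct (good_short s _ _ hs q2) as [g2 l2].
    destruct (good_short s _ _ hs q3) as [g3 l3].
    unfold typ3. repeat split; auto. apply good_sym; auto.
    rewrite (lng_sym s A' C'), l1, l2, l3. reflexivity.
  - destruct (good_short s _ _ hs q1) as [g1 l1]. destruct (good_long s _ _ hs q2) as [g2 l2].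
    destruct (good_short s _ _ hs q3) as [g3 l3].
    unfold typ3. repeat split; auto. apply good_sym; auto.
    rewrite (lng_sym s A' C'), l1, l2, l3. reflexivity.
  - destruct (good_short s _ _ hs q1) as [g1 l1]. destruct (good_short s _ _ hs q2) as [g2 l2].
    destruct (good_long s _ _ hs q3) as [g3 l3].
    unfold typ3. repeat split; auto. apply good_sym; auto.
    rewrite (lng_sym s A' C'), l1, l2, l3. reflexivity.
Qed.

Lemma forms_typ3 a b c s p q r : Sides a b c s -> forms_eps_congruent a b c epsv p q r -> typ3 s p q r.
Proof.
  intros HS H.
  destruct H as [H|[H|[H|[H|[H|H]]]]]; apply (ec_typ3 _ _ _ s) in H; auto;
  first [ exact H | exact (typ3_12 _ _ _ _ H) | exact (typ3_23 _ _ _ _ H)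
        | exact (typ3_12 _ _ _ _ (typ3_23 _ _ _ _ H)) | exact (typ3_23 _ _ _ _ (typ3_12 _ _ _ _ H))
        | exact (typ3_12 _ _ _ _ (typ3_23 _ _ _ _ (typ3_12 _ _ _ _ H))) ].
Qed.


Definition det3 (m11 m12 m13 m21 m22 m23 m31 m32 m33 : R) : R :=
  m11 * (m22 * m33 - m23 * m32) - m12 * (m21 * m33 - m23 * m31) + m13 * (m21 * m32 - m22 * m31).

Definition gram (o a b : pt) : R :=
  (fst a - fst o) * (fst b - fst o) + (snd a - snd o) * (snd b - snd o).

Lemma gram_D o a b : gram o a b = (D o a + D o b - D a b) / 2.
Proof. unfold gram, D. field. Qed.

Lemma gram_det0 o a1 a2 a3 b1 b2 b3 :
  det3 (gram o a1 b1) (gram o a1 b2) (gram o a1 b3)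
       (gram o a2 b1) (gram o a2 b2) (gram o a2 b3)
       (gram o a3 b1) (gram o a3 b2) (gram o a3 b3) = 0.
Proof. unfold det3, gram. ring. Qed.

Lemma prod3 x y z dx dy dz h : Rabs x <= 3 -> Rabs y <= 3 -> Rabs z <= 3 ->
  Rabs dx <= h -> Rabs dy <= h -> Rabs dz <= h -> 0 <= h <= 1/1000 ->
  Rabs ((x + dx) * (y + dy) * (z + dz) - x * y * z) <= 28 * h.
Proof.
  intros hx hy hz hdx hdy hdz hh.
  replace ((x + dx) * (y + dy) * (z + dz) - x * y * z) with
    (dx * (y + dy) * (z + dz) + x * dy * (z + dz) + x * y * dz) by ring.
  assert (hy' : Rabs (y + dy) <= 3 + h) by (eapply Rle_trans; [apply Rabs_triang|lra]).
  assert (hz' : Rabs (z + dz) <= 3 + h) by (eapply Rle_trans; [apply Rabs_triang|lra]).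
  eapply Rle_trans; [apply Rabs_triang|]. eapply Rle_trans; [apply Rplus_le_compat_r; apply Rabs_triang|].
  rewrite !Rabs_mult.
  assert (a1 : Rabs dx * Rabs (y + dy) * Rabs (z + dz) <= h * (3 + h) * (3 + h)).
  { apply Rmult_le_compat; try apply Rabs_pos. 
    - apply Rmult_le_pos; apply Rabs_pos.
    - apply Rmult_le_compat; try apply Rabs_pos; lra.
    - lra. }
  assert (a2 : Rabs x * Rabs dy * Rabs (z + dz) <= 3 * h * (3 + h)).
  { apply Rmult_le_compat; try apply Rabs_pos.
    - apply Rmult_le_pos; apply Rabs_pos.
    - apply Rmult_le_compat; try apply Rabs_pos; lra.
    - lra. }
  assert (a3 : Rabs x * Rabs y * Rabs dz <= 3 * 3 * h).
  { apply Rmult_le_compat; try apply Rabs_pos.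
    - apply Rmult_le_pos; apply Rabs_pos.
    - apply Rmult_le_compat; try apply Rabs_pos; lra.
    - lra. }
  nra.
Qed.

Lemma abs6 a b c d e f : Rabs (a - b - c + d + e - f) <= Rabs a + Rabs b + Rabs c + Rabs d + Rabs e + Rabs f.
Proof.
  unfold Rabs; repeat destruct Rcase_abs; lra.
Qed.

Lemma det3_pert (x11 x12 x13 x21 x22 x23 x31 x32 x33 d11 d12 d13 d21 d22 d23 d31 d32 d33 h : R) :
  Rabs x11 <= 3 -> Rabs x12 <= 3 -> Rabs x13 <= 3 ->
  Rabs x21 <= 3 -> Rabs x22 <= 3 -> Rabs x23 <= 3 ->
  Rabs x31 <= 3 -> Rabs x32 <= 3 -> Rabs x33 <= 3 ->
  Rabs d11 <= h -> Rabs d12 <= h -> Rabs d13 <= h ->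
  Rabs d21 <= h -> Rabs d22 <= h -> Rabs d23 <= h ->
  Rabs d31 <= h -> Rabs d32 <= h -> Rabs d33 <= h -> 0 <= h <= 1/1000 ->
  Rabs (det3 (x11+d11) (x12+d12) (x13+d13) (x21+d21) (x22+d22) (x23+d23) (x31+d31) (x32+d32) (x33+d33)
        - det3 x11 x12 x13 x21 x22 x23 x31 x32 x33) <= 168 * h.
Proof.
  intros. unfold det3.
  match goal with |- Rabs ?e <= _ =>
    replace e with
     (((x11+d11)*(x22+d22)*(x33+d33) - x11*x22*x33)
     - ((x11+d11)*(x23+d23)*(x32+d32) - x11*x23*x32)
     - ((x12+d12)*(x21+d21)*(x33+d33) - x12*x21*x33)
     + ((x12+d12)*(x23+d23)*(x31+d31) - x12*x23*x31)
     + ((x13+d13)*(x21+d21)*(x32+d32) - x13*x21*x32)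
     - ((x13+d13)*(x22+d22)*(x31+d31) - x13*x22*x31)) by ring end.
  assert (p1 := prod3 x11 x22 x33 d11 d22 d33 h ltac:(assumption) ltac:(assumption) ltac:(assumption) ltac:(assumption) ltac:(assumption) ltac:(assumption) ltac:(assumption)).
  assert (p2 := prod3 x11 x23 x32 d11 d23 d32 h ltac:(assumption) ltac:(assumption) ltac:(assumption) ltac:(assumption) ltac:(assumption) ltac:(assumption) ltac:(assumption)).
  assert (p3 := prod3 x12 x21 x33 d12 d21 d33 h ltac:(assumption) ltac:(assumption) ltac:(assumption) ltac:(assumption) ltac:(assumption) ltac:(assumption) ltac:(assumption)).
  assert (p4 := prod3 x12 x23 x31 d12 d23 d31 h ltac:(assumption) ltac:(assumption) ltac:(assumption) ltac:(assumption) ltac:(assumption) ltac:(assumption) ltac:(assumption)).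
  assert (p5 := prod3 x13 x21 x32 d13 d21 d32 h ltac:(assumption) ltac:(assumption) ltac:(assumption) ltac:(assumption) ltac:(assumption) ltac:(assumption) ltac:(assumption)).
  assert (p6 := prod3 x13 x22 x31 d13 d22 d31 h ltac:(assumption) ltac:(assumption) ltac:(assumption) ltac:(assumption) ltac:(assumption) ltac:(assumption) ltac:(assumption)).
  match goal with |- Rabs (?a - ?b - ?c + ?d + ?e - ?f) <= _ =>
    assert (k := abs6 a b c d e f) end.
  lra.
Qed.

Open Scope Z_scope.
Definition cZ (pat : nat -> nat -> bool) (i j : nat) : Z :=
  if Nat.eqb i j then 0 else if pat (Nat.min i j) (Nat.max i j) then 3 else 1.
Definition gZ pat i j : Z := cZ pat 0 i + cZ pat 0 j - cZ pat i j.
Definition det3Z (m11 m12 m13 m21 m22 m23 m31 m32 m33 : Z) : Z :=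
  m11 * (m22 * m33 - m23 * m32) - m12 * (m21 * m33 - m23 * m31) + m13 * (m21 * m32 - m22 * m31).
Definition minor := ((nat * nat * nat) * (nat * nat * nat))%type.
Definition zminor pat (m : minor) : Z :=
  let '((i1, i2, i3), (j1, j2, j3)) := m in
  det3Z (gZ pat i1 j1) (gZ pat i1 j2) (gZ pat i1 j3)
        (gZ pat i2 j1) (gZ pat i2 j2) (gZ pat i2 j3)
        (gZ pat i3 j1) (gZ pat i3 j2) (gZ pat i3 j3).
Close Scope Z_scope.

Lemma cZ_range pat i j : (0 <= cZ pat i j <= 3)%Z.
Proof. unfold cZ. destruct (Nat.eqb i j); [lia|]. destruct pat; lia. Qed.

Lemma det3_IZR a b c d e f g h i :
  det3 (IZR a / 2) (IZR b / 2) (IZR c / 2) (IZR d / 2) (IZR e / 2) (IZR f / 2) (IZR g / 2) (IZR h / 2) (IZR i / 2)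
  = IZR (det3Z a b c d e f g h i) / 8.
Proof.
  unfold det3, det3Z. repeat (rewrite ?minus_IZR, ?plus_IZR, ?mult_IZR). field.
Qed.

Lemma det3_scale k a b c d e f g h i : k <> 0 ->
  det3 (a / k) (b / k) (c / k) (d / k) (e / k) (f / k) (g / k) (h / k) (i / k)
  = det3 a b c d e f g h i / (k * k * k).
Proof. intros. unfold det3. field. auto. Qed.

Lemma div_bound X k c : 0 < k -> Rabs X <= c * k -> Rabs (X / k) <= c.
Proof.
  intros hk h. apply Rabs_le_inv in h.
  assert (e : X / k * k = X) by (field; lra).
  set (y := X / k) in *. apply Rabs_le. split; nra.
Qed.

Lemma entry_approx s (q : nat -> pt) pat N i j : 0 < s ->
  (forall i j, (i <= N)%nat -> (j <= N)%nat ->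
     Rabs (D (q i) (q j) - IZR (cZ pat i j) * s ^ 2) <= eta * s ^ 2) ->
  (i <= N)%nat -> (j <= N)%nat ->
  Rabs (gram (q 0%nat) (q i) (q j) / s ^ 2 - IZR (gZ pat i j) / 2) <= 3 / 2 * eta /\
  Rabs (IZR (gZ pat i j) / 2) <= 3.
Proof.
  intros hs H hi hj.
  assert (h0i := H 0%nat i ltac:(lia) hi). assert (h0j := H 0%nat j ltac:(lia) hj).
  assert (hij := H i j hi hj).
  assert (r1 := cZ_range pat 0 i). assert (r2 := cZ_range pat 0 j). assert (r3 := cZ_range pat i j).
  apply Rabs_le_inv in h0i, h0j, hij.
  assert (hs2 : 0 < s ^ 2) by (apply pow_lt; auto).
  unfold gZ. rewrite minus_IZR, plus_IZR. rewrite gram_D.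
  destruct r1 as [r1a r1b]. destruct r2 as [r2a r2b]. destruct r3 as [r3a r3b].
  apply IZR_le in r1a, r1b, r2a, r2b, r3a, r3b.
  split.
  - replace ((D (q 0%nat) (q i) + D (q 0%nat) (q j) - D (q i) (q j)) / 2 / s ^ 2 -
       (IZR (cZ pat 0 i) + IZR (cZ pat 0 j) - IZR (cZ pat i j)) / 2)
    with (((D (q 0%nat) (q i) - IZR (cZ pat 0 i) * s ^ 2) + (D (q 0%nat) (q j) - IZR (cZ pat 0 j) * s ^ 2)
          - (D (q i) (q j) - IZR (cZ pat i j) * s ^ 2)) / (2 * s ^ 2)) by (field; lra).
    apply div_bound; [lra|]. apply Rabs_le. lra.
  - apply Rabs_le. lra.
Qed.

Lemma gram_contra s (q : nat -> pt) pat N i1 i2 i3 j1 j2 j3 : 0 < s ->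
  (forall i j, (i <= N)%nat -> (j <= N)%nat ->
     Rabs (D (q i) (q j) - IZR (cZ pat i j) * s ^ 2) <= eta * s ^ 2) ->
  (i1 <= N)%nat -> (i2 <= N)%nat -> (i3 <= N)%nat -> (j1 <= N)%nat -> (j2 <= N)%nat -> (j3 <= N)%nat ->
  zminor pat ((i1, i2, i3), (j1, j2, j3)) = 0%Z.
Proof.
  intros hs H h1 h2 h3 k1 k2 k3.
  assert (hs2 : 0 < s ^ 2) by (apply pow_lt; auto).
  destruct (entry_approx s q pat N i1 j1 hs H h1 k1) as [a11 b11].
  destruct (entry_approx s q pat N i1 j2 hs H h1 k2) as [a12 b12].
  destruct (entry_approx s q pat N i1 j3 hs H h1 k3) as [a13 b13].
  destruct (entry_approx s q pat N i2 j1 hs H h2 k1) as [a21 b21].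
  destruct (entry_approx s q pat N i2 j2 hs H h2 k2) as [a22 b22].
  destruct (entry_approx s q pat N i2 j3 hs H h2 k3) as [a23 b23].
  destruct (entry_approx s q pat N i3 j1 hs H h3 k1) as [a31 b31].
  destruct (entry_approx s q pat N i3 j2 hs H h3 k2) as [a32 b32].
  destruct (entry_approx s q pat N i3 j3 hs H h3 k3) as [a33 b33].
  set (o := q 0%nat) in *.
  match type of a11 with Rabs (?r - ?e) <= _ => set (r11 := r) in *; set (e11 := e) in * end.
  match type of a12 with Rabs (?r - ?e) <= _ => set (r12 := r) in *; set (e12 := e) in * end.
  match type of a13 with Rabs (?r - ?e) <= _ => set (r13 := r) in *; set (e13 := e) in * end.
  match type of a21 with Rabs (?r - ?e) <= _ => set (r21 := r) in *; set (e21 := e) in * end.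
  match type of a22 with Rabs (?r - ?e) <= _ => set (r22 := r) in *; set (e22 := e) in * end.
  match type of a23 with Rabs (?r - ?e) <= _ => set (r23 := r) in *; set (e23 := e) in * end.
  match type of a31 with Rabs (?r - ?e) <= _ => set (r31 := r) in *; set (e31 := e) in * end.
  match type of a32 with Rabs (?r - ?e) <= _ => set (r32 := r) in *; set (e32 := e) in * end.
  match type of a33 with Rabs (?r - ?e) <= _ => set (r33 := r) in *; set (e33 := e) in * end.
  assert (hP := det3_pert e11 e12 e13 e21 e22 e23 e31 e32 e33
     (r11 - e11) (r12 - e12) (r13 - e13) (r21 - e21) (r22 - e22) (r23 - e23) (r31 - e31) (r32 - e32) (r33 - e33)
     (3/2 * eta) b11 b12 b13 b21 b22 b23 b31 b32 b33 a11 a12 a13 a21 a22 a23 a31 a32 a33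
     ltac:(unfold eta; lra)).
  replace (e11 + (r11 - e11)) with r11 in hP by ring.
  replace (e12 + (r12 - e12)) with r12 in hP by ring.
  replace (e13 + (r13 - e13)) with r13 in hP by ring.
  replace (e21 + (r21 - e21)) with r21 in hP by ring.
  replace (e22 + (r22 - e22)) with r22 in hP by ring.
  replace (e23 + (r23 - e23)) with r23 in hP by ring.
  replace (e31 + (r31 - e31)) with r31 in hP by ring.
  replace (e32 + (r32 - e32)) with r32 in hP by ring.
  replace (e33 + (r33 - e33)) with r33 in hP by ring.
  assert (z0 : det3 r11 r12 r13 r21 r22 r23 r31 r32 r33 = 0).
  { unfold r11, r12, r13, r21, r22, r23, r31, r32, r33.
    rewrite det3_scale by lra. rewrite gram_det0. unfold Rdiv. ring. }
  rewrite z0 in hP. unfold e11, e12, e13, e21, e22, e23, e31, e32, e33 in hP.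
  rewrite det3_IZR in hP. simpl zminor.
  set (z := det3Z _ _ _ _ _ _ _ _ _) in *.
  unfold eta in hP. apply Rabs_le_inv in hP.
  assert (l1 : -1 < IZR z) by lra. assert (l2 : IZR z < 1) by lra.
  apply lt_IZR in l1. apply lt_IZR in l2. lia.
Qed.


Definition mkpat5 (b01 b02 b03 b04 b12 b13 b14 b23 b24 b34 : bool) (i j : nat) : bool :=
  match i, j with
  | 0, 1 => b01 | 0, 2 => b02 | 0, 3 => b03 | 0, 4 => b04
  | 1, 2 => b12 | 1, 3 => b13 | 1, 4 => b14
  | 2, 3 => b23 | 2, 4 => b24 | 3, 4 => b34
  | _, _ => false end%nat.

Definition trip := [(1,2,3);(1,2,4);(1,3,4);(2,3,4)]%nat.
Definition minors5 : list minor := flat_map (fun I => map (fun J => (I, J)) trip) trip.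

Definition check5 pat : bool := existsb (fun m => negb (Z.eqb (zminor pat m) 0)) minors5.

Lemma all5 : forall b01 b02 b03 b04 b12 b13 b14 b23 b24 b34,
  check5 (mkpat5 b01 b02 b03 b04 b12 b13 b14 b23 b24 b34) = true.
Proof.
  intros. destruct b01, b02, b03, b04, b12, b13, b14, b23, b24, b34; vm_compute; reflexivity.
Qed.

Definition mkpat4 (b01 b02 b03 b12 b13 b23 : bool) := mkpat5 b01 b02 b03 false b12 b13 false b23 false false.
Definition cond4 (b01 b02 b03 b12 b13 b23 : bool) : bool :=
  Nat.eqb (nb b01 + nb b12 + nb b02) 1 && Nat.eqb (nb b01 + nb b13 + nb b03) 1 &&
  Nat.eqb (nb b02 + nb b23 + nb b03) 1 && Nat.eqb (nb b12 + nb b23 + nb b13) 1.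

Lemma all4 : forall b01 b02 b03 b12 b13 b23, cond4 b01 b02 b03 b12 b13 b23 = true ->
  zminor (mkpat4 b01 b02 b03 b12 b13 b23) ((1,2,3),(1,2,3))%nat <> 0%Z.
Proof.
  intros. destruct b01, b02, b03, b12, b13, b23; vm_compute in H; try discriminate; vm_compute; discriminate.
Qed.

Lemma good_cZ s p q (pat : nat -> nat -> bool) i j : good s p q -> (i <> j)%nat ->
  pat (Nat.min i j) (Nat.max i j) = lng s p q ->
  Rabs (D p q - IZR (cZ pat i j) * s ^ 2) <= eta * s ^ 2.
Proof.
  intros g hij hp. unfold cZ. destruct (Nat.eqb_spec i j); [contradiction|].
  rewrite hp. unfold good, cval in g. destruct (lng s p q); exact g.
Qed.

Lemma hyp_build s (q : nat -> pt) pat N :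
  (forall i j, (i < j)%nat -> (j <= N)%nat -> pat i j = lng s (q i) (q j)) ->
  (forall i j, (i <= N)%nat -> (j <= N)%nat -> i <> j -> good s (q i) (q j)) ->
  forall i j, (i <= N)%nat -> (j <= N)%nat ->
     Rabs (D (q i) (q j) - IZR (cZ pat i j) * s ^ 2) <= eta * s ^ 2.
Proof.
  intros hp hg i j hi hj.
  destruct (Nat.eq_dec i j) as [->|hne].
  - unfold cZ. rewrite Nat.eqb_refl, D_refl. rewrite Rmult_0_l, Rminus_0_r, Rabs_R0.
    unfold eta. assert (0 <= s ^ 2) by apply pow2_ge_0. lra.
  - apply good_cZ; auto.
    destruct (Nat.lt_ge_cases i j).
    + rewrite Nat.min_l, Nat.max_r by lia. apply hp; lia.
    + rewrite Nat.min_r, Nat.max_l by lia. rewrite lng_sym. apply hp; lia.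
Qed.

Lemma five_contra s (q : nat -> pt) : 0 < s ->
  (forall i j, (i <= 4)%nat -> (j <= 4)%nat -> i <> j -> good s (q i) (q j)) -> False.
Proof.
  intros hs hg.
  set (pat := mkpat5 (lng s (q 0%nat) (q 1%nat)) (lng s (q 0%nat) (q 2%nat)) (lng s (q 0%nat) (q 3%nat))
     (lng s (q 0%nat) (q 4%nat)) (lng s (q 1%nat) (q 2%nat)) (lng s (q 1%nat) (q 3%nat))
     (lng s (q 1%nat) (q 4%nat)) (lng s (q 2%nat) (q 3%nat)) (lng s (q 2%nat) (q 4%nat))
     (lng s (q 3%nat) (q 4%nat))).
  assert (hp : forall i j, (i < j)%nat -> (j <= 4)%nat -> pat i j = lng s (q i) (q j)).
  { intros i j h1 h2.
    destruct i as [|[|[|[|[|i]]]]]; destruct j as [|[|[|[|[|j]]]]]; try lia; reflexivity. }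
  assert (H := hyp_build s q pat 4 hp hg).
  assert (C := all5 (lng s (q 0%nat) (q 1%nat)) (lng s (q 0%nat) (q 2%nat)) (lng s (q 0%nat) (q 3%nat))
     (lng s (q 0%nat) (q 4%nat)) (lng s (q 1%nat) (q 2%nat)) (lng s (q 1%nat) (q 3%nat))
     (lng s (q 1%nat) (q 4%nat)) (lng s (q 2%nat) (q 3%nat)) (lng s (q 2%nat) (q 4%nat))
     (lng s (q 3%nat) (q 4%nat))).
  fold pat in C. unfold check5 in C. apply existsb_exists in C. destruct C as [m [hm hz]].
  unfold minors5, trip in hm. simpl in hm.
  repeat (destruct hm as [hm|hm]; [subst m; rewrite (gram_contra s q pat 4) in hz by (auto; lia); discriminate|]).
  contradiction.
Qed.

Lemma typ3_good12 s p q r : typ3 s p q r -> good s p q. Proof. intros [h _]. exact h. Qed.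

Lemma four_contra s (q : nat -> pt) : 0 < s ->
  typ3 s (q 0%nat) (q 1%nat) (q 2%nat) -> typ3 s (q 0%nat) (q 1%nat) (q 3%nat) ->
  typ3 s (q 0%nat) (q 2%nat) (q 3%nat) -> typ3 s (q 1%nat) (q 2%nat) (q 3%nat) -> False.
Proof.
  intros hs t1 t2 t3 t4.
  set (pat := mkpat4 (lng s (q 0%nat) (q 1%nat)) (lng s (q 0%nat) (q 2%nat)) (lng s (q 0%nat) (q 3%nat))
     (lng s (q 1%nat) (q 2%nat)) (lng s (q 1%nat) (q 3%nat)) (lng s (q 2%nat) (q 3%nat))).
  assert (hp : forall i j, (i < j)%nat -> (j <= 3)%nat -> pat i j = lng s (q i) (q j)).
  { intros i j h1 h2.
    destruct i as [|[|[|[|i]]]]; destruct j as [|[|[|[|j]]]]; try lia; reflexivity. }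
  assert (hg : forall i j, (i <= 3)%nat -> (j <= 3)%nat -> i <> j -> good s (q i) (q j)).
  { destruct t1 as [g01 [g12 [g02 _]]]. destruct t2 as [_ [g13 [g03 _]]].
    destruct t3 as [_ [g23 _]].
    intros i j h1 h2 h3.
    destruct i as [|[|[|[|i]]]]; destruct j as [|[|[|[|j]]]]; try lia; auto; apply good_sym; auto. }
  assert (H := hyp_build s q pat 3 hp hg).
  assert (Z := gram_contra s q pat 3 1 2 3 1 2 3 hs H ltac:(lia) ltac:(lia) ltac:(lia) ltac:(lia) ltac:(lia) ltac:(lia)).
  revert Z. apply all4.
  destruct t1 as [_ [_ [_ c1]]]. destruct t2 as [_ [_ [_ c2]]].
  destruct t3 as [_ [_ [_ c3]]]. destruct t4 as [_ [_ [_ c4]]].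
  unfold cond4. rewrite c1, c2, c3, c4. reflexivity.
Qed.


Fixpoint lsum {A : Type} (f : A -> R) (l : list A) : R :=
  match l with nil => 0 | x :: t => f x + lsum f t end.

Lemma lsum_app {A} (f : A -> R) l1 l2 : lsum f (l1 ++ l2) = lsum f l1 + lsum f l2.
Proof. induction l1; simpl; lra. Qed.
Lemma lsum_ext {A} (f g : A -> R) l : (forall x, In x l -> f x = g x) -> lsum f l = lsum g l.
Proof. induction l; simpl; intros H; auto. rewrite H, IHl; auto. Qed.
Lemma lsum_plus {A} (f g : A -> R) l : lsum (fun x => f x + g x) l = lsum f l + lsum g l.
Proof. induction l; simpl; lra. Qed.
Lemma lsum_scal {A} (c : R) (f : A -> R) l : lsum (fun x => c * f x) l = c * lsum f l.
Proof. induction l; simpl; lra. Qed.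
Lemma lsum_zero {A} (f : A -> R) l : (forall x, In x l -> f x = 0) -> lsum f l = 0.
Proof. induction l; simpl; intros H; auto. rewrite H, IHl; auto. lra. Qed.
Lemma lsum_perm {A} (f : A -> R) l l' : Permutation l l' -> lsum f l = lsum f l'.
Proof. induction 1; simpl; lra. Qed.
Lemma lsum_nonneg {A} (f : A -> R) l : (forall x, In x l -> 0 <= f x) -> 0 <= lsum f l.
Proof. induction l; simpl; intros H; [lra|]. assert (0 <= f a) by auto. assert (0 <= lsum f l) by auto. lra. Qed.

Notation wpt := (pt * R)%type.


Definition Fw (G : pt -> pt -> pt -> R) (L : list wpt) : R :=
  lsum (fun x => lsum (fun y => lsum (fun z =>
    G (fst x) (fst y) (fst z) * snd x * snd y * snd z) L) L) L.
Definition Aw (G : pt -> pt -> pt -> R) (L : list wpt) (p : pt) : R :=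
  lsum (fun y => lsum (fun z => G p (fst y) (fst z) * snd y * snd z) L) L.
Definition Ww (L : list wpt) : R := lsum snd L.

Definition Gsym (G : pt -> pt -> pt -> R) : Prop :=
  (forall p q r, G p q r = G q p r) /\ (forall p q r, G p q r = G p r q) /\ (forall p q, G p p q = 0).

Lemma G_facts G : Gsym G -> (forall p q, G p q p = 0) /\ (forall p q, G q p p = 0).
Proof.
  intros [s12 [s23 z]]. split; intros.
  - rewrite s23. apply z.
  - rewrite s12, s23. apply z.
Qed.

Lemma F_perm G L L' : Permutation L L' -> Fw G L = Fw G L'.
Proof.
  intros hp. unfold Fw.
  transitivity (lsum (fun x => lsum (fun y => lsum (fun z =>
    G (fst x) (fst y) (fst z) * snd x * snd y * snd z) L') L') L).
  - apply lsum_ext; intros. transitivity (lsum (fun y => lsum (fun z =>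
      G (fst x) (fst y) (fst z) * snd x * snd y * snd z) L') L).
    + apply lsum_ext; intros. apply lsum_perm; auto.
    + apply lsum_perm; auto.
  - apply lsum_perm; auto.
Qed.

Lemma W_perm L L' : Permutation L L' -> Ww L = Ww L'.
Proof. apply lsum_perm. Qed.

Lemma F_cons G a L : Gsym G -> Fw G (a :: L) = Fw G L + 3 * snd a * Aw G L (fst a).
Proof.
  intros HG. destruct (G_facts G HG) as [z2 z3]. destruct HG as [s12 [s23 z1]].
  unfold Fw, Aw. simpl. rewrite z1.
  set (A := lsum (fun y => lsum (fun z => G (fst a) (fst y) (fst z) * snd y * snd z) L) L).
  set (F0 := lsum (fun x => lsum (fun y => lsum (fun z =>
           G (fst x) (fst y) (fst z) * snd x * snd y * snd z) L) L) L).
  rewrite (lsum_zero (fun z => G (fst a) (fst a) (fst z) * snd a * snd a * snd z))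
    by (intros; rewrite z1; ring).
  rewrite lsum_plus.
  rewrite (lsum_zero (fun x => G (fst a) (fst x) (fst a) * snd a * snd x * snd a))
    by (intros; rewrite z2; ring).
  assert (e3 : lsum (fun x => lsum (fun z => G (fst a) (fst x) (fst z) * snd a * snd x * snd z) L) L
     = snd a * A).
  { unfold A. rewrite <- lsum_scal. apply lsum_ext; intros x _. rewrite <- lsum_scal.
    apply lsum_ext; intros; ring. }
  rewrite e3.
  assert (e4 : forall x, G (fst x) (fst a) (fst a) * snd x * snd a * snd a +
     lsum (fun z => G (fst x) (fst a) (fst z) * snd x * snd a * snd z) L +
     lsum (fun y => G (fst x) (fst y) (fst a) * snd x * snd y * snd a +
        lsum (fun z => G (fst x) (fst y) (fst z) * snd x * snd y * snd z) L) L
     = 2 * lsum (fun z => G (fst a) (fst x) (fst z) * snd a * snd x * snd z) L +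
       lsum (fun y => lsum (fun z => G (fst x) (fst y) (fst z) * snd x * snd y * snd z) L) L).
  { intros x. rewrite z3. rewrite lsum_plus.
    assert (lsum (fun z => G (fst x) (fst a) (fst z) * snd x * snd a * snd z) L =
            lsum (fun z => G (fst a) (fst x) (fst z) * snd a * snd x * snd z) L)
      by (apply lsum_ext; intros; rewrite s12; ring).
    assert (lsum (fun y => G (fst x) (fst y) (fst a) * snd x * snd y * snd a) L =
            lsum (fun z => G (fst a) (fst x) (fst z) * snd a * snd x * snd z) L)
      by (apply lsum_ext; intros; rewrite s23, s12; ring).
    lra. }
  rewrite (lsum_ext _ _ L (fun x _ => e4 x)).
  rewrite lsum_plus, lsum_scal, e3. fold F0. ring.
Qed.

Lemma A_cons G y L p : Gsym G ->
  Aw G (y :: L) p = Aw G L p + 2 * snd y * lsum (fun z => G p (fst y) (fst z) * snd z) L.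
Proof.
  intros HG. destruct (G_facts G HG) as [z2 z3]. destruct HG as [s12 [s23 z1]].
  unfold Aw. simpl. rewrite z3. rewrite lsum_plus.
  assert (lsum (fun z => G p (fst y) (fst z) * snd y * snd z) L =
          snd y * lsum (fun z => G p (fst y) (fst z) * snd z) L).
  { rewrite <- lsum_scal. apply lsum_ext; intros; ring. }
  assert (lsum (fun x => G p (fst x) (fst y) * snd x * snd y) L =
          snd y * lsum (fun z => G p (fst y) (fst z) * snd z) L).
  { rewrite <- lsum_scal. apply lsum_ext; intros; rewrite s23; ring. }
  lra.
Qed.

Lemma merge G x y R : Gsym G -> (forall z, In z R -> G (fst x) (fst y) (fst z) = 0) ->
  0 <= snd x -> 0 <= snd y ->
  Fw G (x :: y :: R) <= Fw G ((fst x, snd x + snd y) :: R) \/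
  Fw G (x :: y :: R) <= Fw G ((fst y, snd x + snd y) :: R).
Proof.
  intros HG hz hx hy.
  rewrite !F_cons by auto. rewrite A_cons by auto. simpl fst. simpl snd.
  rewrite (lsum_zero (fun z => G (fst x) (fst y) (fst z) * snd z)) by (intros; rewrite hz; auto; ring).
  destruct (Rle_dec (Aw G R (fst y)) (Aw G R (fst x))) as [h|h]; [left|right].
  - assert (snd y * Aw G R (fst y) <= snd y * Aw G R (fst x)) by (apply Rmult_le_compat_l; auto). lra.
  - apply Rnot_le_lt in h.
    assert (snd x * Aw G R (fst x) <= snd x * Aw G R (fst y)) by (apply Rmult_le_compat_l; lra). lra.
Qed.

Lemma F_nil G : Fw G [] = 0. Proof. reflexivity. Qed.
Lemma A_nil G p : Aw G [] p = 0. Proof. reflexivity. Qed.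

Lemma F_small2 G a b : Gsym G -> Fw G [a; b] = 0.
Proof.
  intros HG. rewrite !F_cons, A_cons, !A_nil, F_nil by auto. simpl. ring.
Qed.

Lemma F_small3 G a b c : Gsym G ->
  Fw G [a; b; c] = 6 * G (fst a) (fst b) (fst c) * snd a * snd b * snd c.
Proof.
  intros HG. rewrite F_cons, F_small2, !A_cons, A_nil by auto. simpl. ring.
Qed.

Lemma F_small4 G a b c d : Gsym G ->
  Fw G [a; b; c; d] = 6 * (G (fst b) (fst c) (fst d) * snd b * snd c * snd d
    + G (fst a) (fst b) (fst c) * snd a * snd b * snd c
    + G (fst a) (fst b) (fst d) * snd a * snd b * snd d
    + G (fst a) (fst c) (fst d) * snd a * snd c * snd d).
Proof.
  intros HG. rewrite F_cons, F_small3, !A_cons, A_nil by auto. simpl. ring.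
Qed.

Lemma poly4 a b c d : 0 <= a -> 0 <= b -> 0 <= c -> 0 <= d ->
  a * (b * c + b * d + c * d) <= 4 / 81 * (a + b + c + d) ^ 3.
Proof.
  intros ha hb hc hd.
  set (t := b + c + d).
  assert (h1 : b * c + b * d + c * d <= t ^ 2 / 3).
  { unfold t. assert (0 <= (b - c) ^ 2) by apply pow2_ge_0. assert (0 <= (b - d) ^ 2) by apply pow2_ge_0.
    assert (0 <= (c - d) ^ 2) by apply pow2_ge_0. lra. }
  assert (h2 : 27 * a * t ^ 2 <= 4 * (a + t) ^ 3).
  { assert (0 <= t) by (unfold t; lra).
    assert (4 * (a + t) ^ 3 - 27 * a * t ^ 2 = (t - 2 * a) ^ 2 * (4 * t + a)) by ring.
    assert (0 <= (t - 2 * a) ^ 2 * (4 * t + a)) by (apply Rmult_le_pos; [apply pow2_ge_0|lra]).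
    lra. }
  replace (a + b + c + d) with (a + t) by (unfold t; ring).
  assert (a * (b * c + b * d + c * d) <= a * (t ^ 2 / 3)) by (apply Rmult_le_compat_l; auto).
  lra.
Qed.

Definition Gbin (G : pt -> pt -> pt -> R) : Prop := forall p q r, G p q r = 0 \/ G p q r = 1.
Definition T4 (G : pt -> pt -> pt -> R) : Prop := forall a b c d,
  G a b c = 1 -> G a b d = 1 -> G a c d = 1 -> G b c d = 1 -> False.
Definition T5 (G : pt -> pt -> pt -> R) : Prop := forall q : nat -> pt,
  (forall i j, (i <= 4)%nat -> (j <= 4)%nat -> i <> j -> exists r, G (q i) (q j) r <> 0) -> False.

Lemma small4_bound G a b c d : Gsym G -> Gbin G -> T4 G ->
  0 <= snd a -> 0 <= snd b -> 0 <= snd c -> 0 <= snd d ->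
  Fw G [a; b; c; d] <= 8 / 27 * Ww [a; b; c; d] ^ 3.
Proof.
  intros HG Hb H4 ha hb hc hd. rewrite F_small4 by auto. unfold Ww. simpl.
  set (wa := snd a) in *. set (wb := snd b) in *. set (wc := snd c) in *. set (wd := snd d) in *.
  assert (pab := Rmult_le_pos _ _ ha hb). assert (pac := Rmult_le_pos _ _ ha hc).
  assert (pbc := Rmult_le_pos _ _ hb hc). assert (pbd := Rmult_le_pos _ _ hb hd).
  assert (pabc := Rmult_le_pos _ _ pab hc). assert (pabd := Rmult_le_pos _ _ pab hd).
  assert (pacd := Rmult_le_pos _ _ pac hd). assert (pbcd := Rmult_le_pos _ _ pbc hd).
  replace (wa + (wb + (wc + (wd + 0)))) with (wa + wb + wc + wd) by ring.
  assert (0 <= (wa + wb + wc + wd) ^ 3) by (apply pow_le; lra).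
  destruct (Hb (fst b) (fst c) (fst d)) as [e1|e1];
  destruct (Hb (fst a) (fst b) (fst c)) as [e2|e2];
  destruct (Hb (fst a) (fst b) (fst d)) as [e3|e3];
  destruct (Hb (fst a) (fst c) (fst d)) as [e4|e4]; rewrite e1, e2, e3, e4;
  try (exfalso; exact (H4 _ _ _ _ e2 e3 e4 e1)).
  all: first
    [ assert (k := poly4 wa wb wc wd ha hb hc hd); lra
    | assert (k := poly4 wb wa wc wd hb ha hc hd); lra
    | assert (k := poly4 wc wa wb wd hc ha hb hd); lra
    | assert (k := poly4 wd wa wb wc hd ha hb hc); lra ].
Qed.

Lemma W_nonneg L : (forall x, In x L -> 0 <= snd x) -> 0 <= Ww L.
Proof. intros. apply lsum_nonneg. auto. Qed.

Lemma perm2 {A} (l1 l2 l3 : list A) x y :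
  Permutation (l1 ++ x :: l2 ++ y :: l3) (x :: y :: (l1 ++ l2 ++ l3)).
Proof.
  eapply perm_trans. { apply Permutation_sym. apply Permutation_middle. }
  apply perm_skip. rewrite app_assoc. eapply perm_trans. { apply Permutation_sym. apply Permutation_middle. }
  apply perm_skip. rewrite app_assoc. apply Permutation_refl.
Qed.

Lemma lag G : Gsym G -> Gbin G -> T4 G -> T5 G -> forall n L, (length L <= n)%nat ->
  (forall x, In x L -> 0 <= snd x) -> Fw G L <= 8 / 27 * Ww L ^ 3.
Proof.
  intros HG Hb H4 H5. induction n as [|n IH]; intros L hl hw.
  { destruct L; simpl in hl; [|lia]. rewrite F_nil. unfold Ww. simpl. lra. }
  assert (hW := W_nonneg L hw).
  destruct L as [|a [|b [|c [|d [|e t]]]]].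
  - rewrite F_nil. unfold Ww. simpl. lra.
  - rewrite F_cons, A_nil, F_nil by auto. assert (0 <= Ww [a] ^ 3) by (apply pow_le; auto). lra.
  - rewrite F_small2 by auto. assert (0 <= Ww [a; b] ^ 3) by (apply pow_le; auto). lra.
  - rewrite F_small3 by auto. unfold Ww in *. simpl in *.
    assert (ha := hw a ltac:(auto)). assert (hb' := hw b ltac:(auto)). assert (hc := hw c ltac:(auto)).
    assert (k := poly4 (snd a) (snd b) (snd c) 0 ha hb' hc ltac:(lra)).
    assert (pabc : 0 <= snd a * snd b * snd c) by (repeat apply Rmult_le_pos; auto).
    destruct (Hb (fst a) (fst b) (fst c)) as [e|e]; rewrite e.
    + assert (0 <= (snd a + (snd b + (snd c + 0)))^3) by (apply pow_le; lra). lra.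
    + replace (snd a + (snd b + (snd c + 0))) with (snd a + snd b + snd c + 0) by ring. lra.
  - apply small4_bound; auto; apply hw; simpl; auto.
  - set (L := a :: b :: c :: d :: e :: t) in *.
    destruct (classic (exists l1 x l2 y l3, L = l1 ++ x :: l2 ++ y :: l3 /\
        forall z, In z (l1 ++ l2 ++ l3) -> G (fst x) (fst y) (fst z) = 0)) as [Hm|Hn].
    + destruct Hm as [l1 [x [l2 [y [l3 [hL hz]]]]]].
      assert (hp := perm2 l1 l2 l3 x y). rewrite <- hL in hp.
      rewrite (F_perm G _ _ hp), (W_perm _ _ hp).
      assert (hx : 0 <= snd x) by (apply hw; rewrite hL; apply in_or_app; simpl; auto).
      assert (hy : 0 <= snd y) by (apply hw; rewrite hL; apply in_or_app; right; simpl; right;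
                                   apply in_or_app; simpl; auto).
      set (R := l1 ++ l2 ++ l3) in *.
      assert (hR : forall z, In z R -> 0 <= snd z).
      { intros z hzR. apply hw. apply (Permutation_in z (Permutation_sym hp)). simpl; auto. }
      assert (hlen : (S (length R) <= n)%nat).
      { apply Permutation_length in hp. simpl in hp. simpl in hl. lia. }
      assert (eW : Ww (x :: y :: R) = Ww ((fst x, snd x + snd y) :: R)) by (unfold Ww; simpl; ring).
      assert (eW' : Ww (x :: y :: R) = Ww ((fst y, snd x + snd y) :: R)) by (unfold Ww; simpl; ring).
      destruct (merge G x y R HG hz hx hy) as [m|m].
      * rewrite eW. eapply Rle_trans; [exact m|]. apply IH.
        { simpl. lia. }
        { intros z [<-|hz']; simpl; auto. lra. }
      * rewrite eW'. eapply Rle_trans; [exact m|]. apply IH.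
        { simpl. lia. }
        { intros z [<-|hz']; simpl; auto. lra. }
    + exfalso. apply (H5 (fun i => fst (nth i L (a)))).
      assert (key : forall i j, (i < j)%nat -> (j <= 4)%nat ->
          exists r, G (fst (nth i L a)) (fst (nth j L a)) r <> 0).
      { intros i j hij hj.
        apply NNPP. intros hno. apply Hn.
        exists (firstn i L), (nth i L a), (firstn (j - i - 1) (skipn (S i) L)), (nth j L a), (skipn (S j) L).
        split.
        - destruct i as [|[|[|[|[|i]]]]]; destruct j as [|[|[|[|[|j]]]]]; try lia; reflexivity.
        - intros z hz. destruct (Req_dec (G (fst (nth i L a)) (fst (nth j L a)) (fst z)) 0) as [h0|h0]; auto.
          exfalso. apply hno. exists (fst z). exact h0. }
      intros i j hi hj hij.
      destruct (Nat.lt_ge_cases i j) as [h|h].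
      * apply key; lia.
      * destruct (key j i ltac:(lia) hi) as [r hr]. exists r. destruct HG as [s12 _]. rewrite s12. exact hr.
Qed.


Definition Sn (n : nat) (f : nat -> R) : R := lsum f (seq 0 n).

Lemma Sn_S n f : Sn (S n) f = Sn n f + f n.
Proof. unfold Sn. rewrite seq_S, lsum_app. simpl. ring. Qed.
Lemma Sn_0 f : Sn 0 f = 0. Proof. reflexivity. Qed.
Lemma Sn_ext n f g : (forall i, (i < n)%nat -> f i = g i) -> Sn n f = Sn n g.
Proof. intros H. unfold Sn. apply lsum_ext. intros x hx. apply in_seq in hx. apply H. lia. Qed.
Lemma Sn_plus n f g : Sn n (fun i => f i + g i) = Sn n f + Sn n g.
Proof. apply lsum_plus. Qed.
Lemma Sn_scal n c f : Sn n (fun i => c * f i) = c * Sn n f.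
Proof. apply lsum_scal. Qed.

Lemma tri2 (h : nat -> nat -> R) : (forall i j, h i j = h j i) -> (forall i, h i i = 0) ->
  forall n, Sn n (fun j => Sn n (fun k => h j k)) = 2 * Sn n (fun k => Sn k (fun j => h j k)).
Proof.
  intros hs hd. induction n.
  - unfold Sn; simpl; ring.
  - rewrite Sn_S. rewrite (Sn_S n (fun k => Sn k (fun j => h j k))).
    rewrite (Sn_ext n (fun j => Sn (S n) (fun k => h j k)) (fun j => Sn n (fun k => h j k) + h j n))
      by (intros; apply Sn_S).
    rewrite Sn_plus, IHn, Sn_S, hd.
    assert (Sn n (fun k => h n k) = Sn n (fun j => h j n)) by (apply Sn_ext; intros; apply hs).
    lra.
Qed.

Lemma tri3 (g : nat -> nat -> nat -> R) :
  (forall i j k, g i j k = g j i k) -> (forall i j k, g i j k = g i k j) -> (forall i k, g i i k = 0) ->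
  forall n, Sn n (fun i => Sn n (fun j => Sn n (fun k => g i j k)))
          = 6 * Sn n (fun k => Sn k (fun j => Sn j (fun i => g i j k))).
Proof.
  intros s12 s23 z. 
  assert (z2 : forall i k, g i k i = 0) by (intros; rewrite s23; apply z).
  assert (z3 : forall i k, g k i i = 0) by (intros; rewrite s12, s23; apply z).
  induction n.
  - unfold Sn; simpl; ring.
  - set (H := Sn n (fun j => Sn n (fun k => g n j k))).
    assert (eL : Sn (S n) (fun i => Sn (S n) (fun j => Sn (S n) (fun k => g i j k)))
       = Sn n (fun i => Sn n (fun j => Sn n (fun k => g i j k))) + 3 * H).
    { rewrite Sn_S.
      rewrite (Sn_ext n (fun i => Sn (S n) (fun j => Sn (S n) (fun k => g i j k)))
         (fun i => Sn n (fun j => Sn n (fun k => g i j k)) + (Sn n (fun j => g i j n) + Sn n (fun k => g i n k)))).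
      2: { intros i _. rewrite Sn_S. rewrite Sn_S, z3.
           rewrite (Sn_ext n (fun j => Sn (S n) (fun k => g i j k)) (fun j => Sn n (fun k => g i j k) + g i j n))
             by (intros; apply Sn_S).
           rewrite Sn_plus. ring. }
      rewrite Sn_plus, Sn_plus.
      rewrite Sn_S, Sn_S, z.
      rewrite (Sn_ext n (fun j => Sn (S n) (fun k => g n j k)) (fun j => Sn n (fun k => g n j k) + g n j n))
        by (intros; apply Sn_S).
      rewrite Sn_plus.
      rewrite (Sn_ext n (fun j => g n j n) (fun _ => 0)) by (intros; apply z2).
      assert (e0 : Sn n (fun _ => 0) = 0) by (unfold Sn; apply lsum_zero; auto).
      assert (a1 : Sn n (fun i => Sn n (fun j => g i j n)) = H).
      { unfold H. apply Sn_ext; intros. apply Sn_ext; intros. rewrite s23, s12. reflexivity. }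
      assert (a2 : Sn n (fun i => Sn n (fun k => g i n k)) = H).
      { unfold H. apply Sn_ext; intros. apply Sn_ext; intros. rewrite s12. reflexivity. }
      assert (a3 : Sn n (fun k => g n n k) = 0).
      { rewrite (Sn_ext n _ (fun _ => 0)) by (intros; apply z). exact e0. }
      rewrite a1, a2, a3, e0. unfold H. ring. }
    rewrite eL, IHn, Sn_S.
    assert (hH : H = 2 * Sn n (fun j => Sn j (fun i => g i j n))).
    { unfold H. rewrite (tri2 (fun j k => g n j k)).
      - f_equal. apply Sn_ext; intros. apply Sn_ext; intros. rewrite s12, s23. reflexivity.
      - intros; apply s23.
      - intros; apply z3. }
    rewrite hH. ring.
Qed.


Definition Gp a b c (p q r : pt) : R := INR (Defs.ind (forms_eps_congruent a b c epsv p q r)).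

Lemma ind_iff (P Q : Prop) : (P <-> Q) -> Defs.ind P = Defs.ind Q.
Proof.
  intros H. unfold Defs.ind. destruct excluded_middle_informative as [h1|h1];
  destruct excluded_middle_informative as [h2|h2]; tauto.
Qed.

Lemma ind_true (P : Prop) : Defs.ind P <> 0%nat -> P.
Proof. unfold Defs.ind. destruct excluded_middle_informative; auto. intros []; reflexivity. Qed.

Lemma Gp_true a b c p q r : Gp a b c p q r <> 0 -> forms_eps_congruent a b c epsv p q r.
Proof.
  intros H. apply ind_true. intros e. apply H. unfold Gp. rewrite e. reflexivity.
Qed.

Lemma good_refl_false s p : 0 < s -> good s p p -> False.
Proof.
  intros hs g. unfold good in g. rewrite D_refl in g. apply Rabs_le_inv in g.
  assert (0 < s ^ 2) by (apply pow_lt; auto).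
  unfold cval, eta in g. destruct lng; lra.
Qed.

Lemma Gp_sym a b c s : Sides a b c s -> Gsym (Gp a b c).
Proof.
  intros HS. split; [|split].
  - intros p q r. unfold Gp. f_equal. apply ind_iff. unfold forms_eps_congruent. tauto.
  - intros p q r. unfold Gp. f_equal. apply ind_iff. unfold forms_eps_congruent. tauto.
  - intros p q. destruct (Req_dec (Gp a b c p p q) 0) as [e|e]; auto.
    exfalso. apply Gp_true in e. apply (forms_typ3 a b c s) in e; auto.
    destruct e as [g _]. destruct HS as [hs _]. exact (good_refl_false s p hs g).
Qed.

Lemma Gp_bin a b c : Gbin (Gp a b c).
Proof.
  intros p q r. unfold Gp, Defs.ind. destruct excluded_middle_informative; simpl; auto.
Qed.

Lemma Gp_T4 a b c s : Sides a b c s -> T4 (Gp a b c).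
Proof.
  intros HS p1 p2 p3 p4 e1 e2 e3 e4.
  assert (t1 := forms_typ3 a b c s _ _ _ HS (Gp_true _ _ _ _ _ _ ltac:(rewrite e1; lra))).
  assert (t2 := forms_typ3 a b c s _ _ _ HS (Gp_true _ _ _ _ _ _ ltac:(rewrite e2; lra))).
  assert (t3 := forms_typ3 a b c s _ _ _ HS (Gp_true _ _ _ _ _ _ ltac:(rewrite e3; lra))).
  assert (t4 := forms_typ3 a b c s _ _ _ HS (Gp_true _ _ _ _ _ _ ltac:(rewrite e4; lra))).
  destruct HS as [hs _].
  apply (four_contra s (fun i => match i with 0 => p1 | 1 => p2 | 2 => p3 | _ => p4 end)%nat hs);
  simpl; auto.
Qed.

Lemma Gp_T5 a b c s : Sides a b c s -> T5 (Gp a b c).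
Proof.
  intros HS q H. destruct HS as [hs HS'].
  apply (five_contra s q hs). intros i j hi hj hij.
  destruct (H i j hi hj hij) as [r hr].
  apply Gp_true in hr. apply (forms_typ3 a b c s) in hr; [|split; auto].
  destruct hr as [g _]. exact g.
Qed.

Lemma INR_list_sum_map {A} (f : A -> nat) l : INR (list_sum (map f l)) = lsum (fun x => INR (f x)) l.
Proof. induction l; simpl; auto. rewrite plus_INR, IHl. reflexivity. Qed.

Lemma lsum_map {A B} (f : B -> R) (g : A -> B) l : lsum f (map g l) = lsum (fun x => f (g x)) l.
Proof. induction l; simpl; auto. rewrite IHl. reflexivity. Qed.

Lemma count_bound a b c s n P : Sides a b c s ->
  INR (count_eps n P a b c epsv) <= 4 / 81 * INR n ^ 3.
Proof.
  intros HS.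
  assert (HG := Gp_sym a b c s HS).
  assert (ec : INR (count_eps n P a b c epsv) =
     Sn n (fun k => Sn k (fun j => Sn j (fun i => Gp a b c (P i) (P j) (P k))))).
  { unfold count_eps, Sn. rewrite INR_list_sum_map. apply lsum_ext; intros k _.
    rewrite INR_list_sum_map. apply lsum_ext; intros j _.
    rewrite INR_list_sum_map. reflexivity. }
  set (L0 := map (fun i => (P i, 1)) (seq 0 n)).
  assert (eF : Fw (Gp a b c) L0 = 6 * INR (count_eps n P a b c epsv)).
  { rewrite ec. destruct HG as [s12 [s23 z]].
    rewrite <- (tri3 (fun i j k => Gp a b c (P i) (P j) (P k))); auto.
    unfold Fw, L0, Sn. rewrite lsum_map. apply lsum_ext; intros i _.
    rewrite lsum_map. apply lsum_ext; intros j _.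
    rewrite lsum_map. apply lsum_ext; intros k _. simpl. ring. }
  assert (eW : Ww L0 = INR n).
  { unfold Ww, L0. rewrite lsum_map. simpl.
    clear. induction n; [reflexivity|]. rewrite seq_S, lsum_app, IHn, S_INR. simpl. ring. }
  assert (hl := lag (Gp a b c) HG (Gp_bin a b c) (Gp_T4 a b c s HS) (Gp_T5 a b c s HS)
     (length L0) L0 (Nat.le_refl _)).
  assert (hw : forall x, In x L0 -> 0 <= snd x).
  { intros x hx. unfold L0 in hx. apply in_map_iff in hx. destruct hx as [i [<- _]]. simpl. lra. }
  specialize (hl hw). rewrite eF, eW in hl. lra.
Qed.

Theorem lemma3p5 : forall a b c : R,
  is_triangle a b c -> of_type a b c 120 30 30 ->
  forall n : nat, (0 < n)%nat ->
  Rbar_le (h n a b c) (Finite (4 / 81 * INR n ^ 3)).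
Proof.
  intros a b c ht hty n hn.
  destruct (sides a b c ht hty) as [s [hs H]].
  assert (HS : Sides a b c s) by (split; auto).
  set (B := 4 / 81 * INR n ^ 3).
  set (E := fun x => exists P : nat -> pt, n_point_set n P /\ x = INR (count_eps n P a b c epsv)).
  assert (hE : h_eps n a b c epsv = Lub_Rbar E) by reflexivity.
  destruct (Lub_Rbar_correct E) as [hub hleast].
  assert (hB : Rbar_le (Lub_Rbar E) (Finite B)).
  { apply hleast. intros x [P [_ ->]]. simpl. apply (count_bound a b c s n P HS). }
  set (P0 := fun i : nat => (INR i, 0)).
  assert (h0 : E (INR (count_eps n P0 a b c epsv))).
  { exists P0. split; auto. intros i j _ _ e. unfold P0 in e. injection e as e'.
    apply INR_eq. exact e'. }
  assert (hlo := hub _ h0).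
  destruct (Lub_Rbar E) as [r| |] eqn:eL; simpl in hB, hlo; try contradiction.
  destruct (Glb_Rbar_correct (fun x => exists eps : R, 0 < eps /\ Finite x = h_eps n a b c eps))
    as [hlb _].
  unfold Defs.h. eapply Rbar_le_trans.
  - apply hlb. exists epsv. split; [unfold epsv; lra|]. rewrite hE. reflexivity.
  - simpl. exact hB.
Qed.
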